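(* Consider MDVI$(\alpha,K,M)$ with any $\alpha\in[0,1)$ and positive integers $K,M$ on an MDP as in the context. Then, for every realization of the samples and every $k\in\{1,\dots,K\}$, $\|v_{k-1}\|_\infty\le H$.
   Context: MDP: finite state set $\mathcal{X}$, finite action set $\mathcal{A}$, discount $\gamma\in[0,1)$, reward $r\in[-1,1]^{\mathcal{X}\times\mathcal{A}}$, transition kernel $P(y|x,a)$, $H=1/(1-\gamma)$. MDVI$(\alpha,K,M)$: $s_0 = 0$, $w_0=w_{-1}=0$; for $k=0,\dots,K-1$: $v_k = w_k-\alpha w_{k-1}$; for each $(x,a)$, independent samples $y_{k,m,x,a}\sim P(\cdot|x,a)$, $m\in[M]$; $q_{k+1}(x,a) = r(x,a)+\frac{\gamma}{M}\sum_m v_k(y_{k,m,x,a})$; $s_{k+1}=q_{k+1}+\alpha s_k$; $w_{k+1}(x)=\max_a s_{k+1}(x,a)$. *)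

(* Defs.v *)
From mathcomp Require Import all_boot all_order all_algebra.
Set Implicit Arguments. Unset Strict Implicit. Unset Printing Implicit Defensive.
Import Order.TTheory GRing.Theory Num.Theory.
Local Open Scope ring_scope.

Section MDVI.
Variables (R : realFieldType) (X A : finType) (a0 : A).

Definition supnorm (v : X -> R) : R := \big[Num.max/0]_(x : X) `|v x|.

(* a (stochastic) transition kernel P(y|x,a) = P x a y *)
Definition is_kernel (P : X -> A -> X -> R) : Prop :=
  forall x a, (forall y, 0 <= P x a y) /\ \sum_(y : X) P x a y = 1.

(* MDVI(alpha, K, M) run on a fixed realization of the samples:
   samp k m x a = y_{k,m,x,a}.  The state after k iterations is
   (s_k, w_k, w_{k-1}); a0 is only the seed of the max over the
   (nonempty) action set, the max itself does not depend on it. *)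
Fixpoint mdvi_state (gamma alpha : R) (r : X -> A -> R) (M : nat)
  (samp : nat -> 'I_M -> X -> A -> X) (k : nat)
  : (X -> A -> R) * (X -> R) * (X -> R) :=
  match k with
  | 0 => (fun _ _ => 0, fun _ => 0, fun _ => 0)
  | k'.+1 =>
      let: (s, w, wp) := mdvi_state gamma alpha r samp k' in
      let v := fun y => w y - alpha * wp y in
      let q := fun x a =>
        r x a + gamma / M%:R * \sum_(m < M) v (samp k' m x a) in
      let s' := fun x a => q x a + alpha * s x a in
      (s', fun x => \big[Num.max/s' x a0]_(a : A) s' x a, w)
  end.

Definition mdvi_v gamma alpha r M samp k : X -> R :=
  let: (_, w, wp) := @mdvi_state gamma alpha r M samp k in
  fun x => w x - alpha * wp x.

End MDVI.

(* Main.v *)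
Require Import Defs.
From mathcomp Require Import all_boot all_order all_algebra.
From mathcomp Require Import ring lra.
Import Order.TTheory GRing.Theory Num.Theory.
Local Open Scope ring_scope.

Lemma bigmax_attained (R : realFieldType) (I : eqType) (r : seq I) (i0 : I) (F : I -> R) :
  exists i, \big[Num.max/F i0]_(j <- r) F j = F i.
Proof.
elim: r => [|a r [i IH]]; first by exists i0; rewrite big_nil.
rewrite big_cons IH; case: (leP (F a) (F i)) => h.
- by exists i.
- by exists a.
Qed.

Lemma inv_step (R : realFieldType) (X A : finType) (a0 : A)
  (gamma : R) (r : X -> A -> R) (alpha : R) (M : nat) 
  (samp : nat -> 'I_M -> X -> A -> X) :
  0 <= gamma < 1 -> (forall x a, -1 <= r x a <= 1) -> 0 <= alpha < 1 -> (0 < M)%N ->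
  forall k, let st := mdvi_state a0 gamma alpha r samp k in
  forall x, st.1.2 x = \big[Num.max/st.1.1 x a0]_(a : A) st.1.1 x a /\
     `|st.1.2 x - alpha * st.2 x| <= (1 - gamma)^-1.
Proof.
move=> /andP[g0 g1] hr /andP[al0 al1] M0.
have Hpos : 0 < 1 - gamma by rewrite subr_gt0.
have HH : 1 + gamma * (1 - gamma)^-1 = (1 - gamma)^-1.
  by field; rewrite subr_eq0 eq_sym lt_eqF.
have H0 : 0 <= (1 - gamma)^-1 by rewrite invr_ge0 ltW.
elim=> [|k IH] /=.
  move=> x; split; last by rewrite mulr0 subr0 normr0.
  by elim/big_rec: _ => // i y _ ->; rewrite maxxx.
move: IH; case: (mdvi_state a0 gamma alpha r samp k) => [[s w] wp] /= IH x.
split => //.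
set H := (1 - gamma)^-1.
set q := fun x a => r x a + gamma / M%:R *
   \sum_(m < M) (w (samp k m x a) - alpha * wp (samp k m x a)).
have hq : forall a, `|q x a| <= H.
  move=> a; rewrite /q /H -HH -/H.
  apply: (le_trans (ler_normD _ _)); apply: lerD.
    by rewrite ler_norml; case/andP: (hr x a) => -> ->.
  rewrite normrM ger0_norm ?divr_ge0 ?ler0n //.
  rewrite -mulrA ler_wpM2l //.
  apply: (le_trans (ler_wpM2l _ (ler_norm_sum _ _ _))); first by rewrite invr_ge0 ler0n.
  apply: (@le_trans _ _ (M%:R^-1 * \sum_(m < M) H)).
    by apply: ler_wpM2l; [rewrite invr_ge0 ler0n | apply: ler_sum => m _; case: (IH (samp k m x a))].
  by rewrite sumr_const card_ord -[H *+ M]mulr_natl mulKf // pnatr_eq0 -lt0n.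
have [Hw _] := IH x.
rewrite Hw.
set m := \big[Num.max/s x a0]_a s x a.
have Hs : forall a, s x a <= m by move=> a; rewrite /m; apply: le_bigmax.
have [ws Hws] := @bigmax_attained R _ (index_enum A) a0 (s x).
have up : \big[Num.max/(q x a0 + alpha * s x a0)]_a (q x a + alpha * s x a) <= H + alpha * m.
  by apply: bigmax_le => [|a _]; (apply: lerD; [exact: le_trans (ler_norm _) (hq _) | rewrite ler_wpM2l]).

have lo : - H + alpha * m <= \big[Num.max/(q x a0 + alpha * s x a0)]_a (q x a + alpha * s x a).
  apply: le_trans (le_bigmax _ _ ws); rewrite /m Hws; apply: lerD => //.
  by have := hq ws; rewrite ler_norml => /andP[].
move: up lo; rewrite /q /=.
move=> up lo; rewrite ler_norml; apply/andP; split.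
  by rewrite lerBrDr.
by rewrite lerBlDr.
Qed.


Theorem lemma24 (R : realFieldType) (X A : finType) (a0 : A)
  (gamma : R) (P : X -> A -> X -> R) (r : X -> A -> R)
  (alpha : R) (K M : nat) :
  0 <= gamma < 1 ->
  is_kernel P ->
  (forall x a, -1 <= r x a <= 1) ->
  0 <= alpha < 1 ->
  (0 < K)%N -> (0 < M)%N ->
  forall samp : nat -> 'I_M -> X -> A -> X,
  forall k : nat, (1 <= k <= K)%N ->
    supnorm (mdvi_v a0 gamma alpha r samp k.-1) <= (1 - gamma)^-1.
Proof.
move=> hg _ hr ha _ hM samp k _.
have Hb := @inv_step R X A a0 gamma r alpha M samp hg hr ha hM k.-1.
have H0 : 0 <= (1 - gamma)^-1 by case/andP: hg => _ g1; rewrite invr_ge0 subr_ge0 ltW.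
rewrite /supnorm /mdvi_v; move: Hb.
case: (mdvi_state a0 gamma alpha r samp k.-1) => [[s w] wp] /= Hb.
by apply: bigmax_le => // x _; case: (Hb x).
Qed.
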